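(* Let $G$ be a connected graph with at least 3 vertices. Then: (a) for every automorphism $\alpha$ of $G$, $|\alpha|_t=|\alpha|+|\alpha|_e$; (b) $\theta''(G)\le \theta(G)+\theta'(G)-1$; (c) $\theta''(G)\le |V(G)|+|E(G)|-1$, with equality when $G\cong K_{1,n}$ for $n\ge 2$.
   Context: All graphs are finite and simple. For an automorphism $\alpha$ (acting on edges by $\alpha(uv)=\alpha(u)\alpha(v)$): - $|\alpha|$ is the number of cycles, including fixed points, of $\alpha$ on $V(G)$; - $|\alpha|_e$ is the number of cycles of $\alpha$ on $E(G)$; - $|\alpha|_t$ is the number of cycles of $\alpha$ acting on $V(G)\cup E(G)$. A vertex, edge, or total coloring with $k$ colors is a surjective map from $V(G)$, $E(G)$, or $V(G)\cup E(G)$ respectively onto $\{1,\dots,k\}$. It is distinguishing if only the identity automorphism preserves all colors. $\theta(G)$, $\theta'(G)$, $\theta''(G)$ denote the least $k$ such that every vertex, edge, or total coloring, respectively, using exactly $k$ colors is distinguishing. *)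

(* Defs.v *)
(* Simple graphs: a symmetric irreflexive relation e on a finType T. *)
From mathcomp Require Import all_boot all_fingroup.
Set Implicit Arguments. Unset Strict Implicit. Unset Printing Implicit Defensive.

Section Graphs.
Variables (T : finType) (e : rel T).

Definition is_aut (s : {perm T}) : bool :=
  [forall x, forall y, e (s x) (s y) == e x y].

Definition is_edge : pred {set T} :=
  fun A => [exists x, exists y, e x y && (A == [set x; y])].

Definition edge := {A : {set T} | is_edge A}.

(* induced action of a permutation on edges: uv |-> s(u)s(v)
   (the default branch is never used for automorphisms) *)
Definition edge_map (s : {perm T}) (a : edge) : edge :=
  insubd a (s @: val a).

Definition tot_map (s : {perm T}) (z : T + edge) : T + edge :=
  match z with inl x => inl (s x) | inr a => inr (edge_map s a) end.

Definition vert_map (s : {perm T}) (x : T) : T := s x.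

(* number of cycles (including fixed points) of a map f on a finite type *)
Definition ncycles (X : finType) (f : X -> X) : nat := fcard f predT.

Definition cyc_v (s : {perm T}) := ncycles (vert_map s).
Definition cyc_e (s : {perm T}) := ncycles (edge_map s).
Definition cyc_t (s : {perm T}) := ncycles (tot_map s).

(* A coloring f : X -> {colors} with exactly k colors (surjective) is
   distinguishing if only the identity automorphism preserves all colors,
   where m s is the action of s on X. *)
Definition surj_col (X : finType) (k : nat) (f : {ffun X -> 'I_k}) : bool :=
  [forall c, [exists x, f x == c]].

Definition distinguishing (X : finType) (m : {perm T} -> X -> X) (k : nat)
  (f : {ffun X -> 'I_k}) : bool :=
  [forall s : {perm T}, (is_aut s && [forall a, f (m s a) == f a]) ==> (s == 1%g)].

Definition theta_prop (X : finType) (m : {perm T} -> X -> X) (k : nat) : bool :=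
  (0 < k) && [forall f : {ffun X -> 'I_k}, surj_col f ==> distinguishing m f].

Lemma theta_prop_ex (X : finType) (m : {perm T} -> X -> X) :
  exists k, theta_prop m k.
Proof.
exists #|X|.+1; apply/andP; split=> //; apply/forallP=> f; apply/implyP=> /forallP sf.
exfalso.
have g_ex : forall c : 'I_#|X|.+1, {x | f x == c}.
  by move=> c; apply: sigW; apply/existsP; exact: sf.
pose g c := sval (g_ex c).
have ginj : injective g.
  move=> c1 c2 eq12; have := svalP (g_ex c1); have := svalP (g_ex c2).
  by rewrite /g in eq12; rewrite eq12 => /eqP -> /eqP.
by have := leq_card g ginj; rewrite card_ord ltnn.
Qed.

Definition theta_gen (X : finType) (m : {perm T} -> X -> X) : nat :=
  ex_minn (theta_prop_ex m).

Definition theta_v := theta_gen vert_map.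
Definition theta_e := theta_gen edge_map.
Definition theta_t := theta_gen tot_map.

Definition is_star : Prop :=
  exists c, forall x y, e x y = (x != y) && ((x == c) || (y == c)).

End Graphs.

(* Main.v *)
Require Import Defs.
From mathcomp Require Import all_boot all_fingroup zify.
Set Implicit Arguments. Unset Strict Implicit. Unset Printing Implicit Defensive.

Lemma imset2E (A B : finType) (f : A -> B) x y : f @: [set x; y] = [set f x; f y].
Proof. by rewrite imsetU1 imset_set1. Qed.

Section Proofs.
Variables (T : finType) (e : rel T).

Lemma autE s : is_aut e s -> forall x y, e (s x) (s y) = e x y.
Proof. by move=> /forallP H x y; apply/eqP; have /forallP := H x; apply. Qed.

Lemma edgeP (a : edge e) : exists x y, e x y /\ val a = [set x; y].
Proof. by case: a => A /= /existsP[x /existsP[y /andP[exy /eqP->]]]; exists x, y. Qed.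

Lemma edge_val s (a : edge e) : is_aut e s -> val (edge_map s a) = s @: val a.
Proof.
move=> As; rewrite /edge_map insubdK //.
have [x [y [exy ->]]] := edgeP a.
rewrite imset2E unfold_in /is_edge; apply/existsP; exists (s x); apply/existsP; exists (s y).
by rewrite autE ?exy ?eqxx.
Qed.

Lemma edge_map_inj s : is_aut e s -> injective (@edge_map _ e s).
Proof.
move=> As a b H; apply: val_inj; apply: (imset_inj (@perm_inj _ s)).
by rewrite -!edge_val // H.
Qed.

Lemma tot_inj s : is_aut e s -> injective (@tot_map _ e s).
Proof.
move=> As [x|a] [y|b] //= [] H; [congr inl; exact: (@perm_inj _ s)|congr inr]...
exact: edge_map_inj H.
Qed.

Lemma partA s : is_aut e s -> cyc_t e s = cyc_v s + cyc_e e s.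
Proof.
move=> As; rewrite /cyc_t /cyc_v /cyc_e /ncycles.
have symt := fconnect_sym (tot_inj As).
pose a := [pred z : T + edge e | if z is inl _ then true else false].
have cla : closed (frel (@tot_map _ e s)) a.
  by move=> [x|u] [y|v] /=.
have symv : connect_sym (frel (vert_map s)) := fconnect_sym (@perm_inj _ s).
have syme : connect_sym (frel (@edge_map _ e s)) := fconnect_sym (edge_map_inj As).
rewrite (n_compC a).
congr (_ + _).
  rewrite (@adjunction_n_comp _ _ inl _ (frel (vert_map s)) symt symv _ cla).
    by apply: eq_n_comp_r.
  apply: strict_adjunction => //; try exact: predC_closed; try (by move=> x y []);
    try (by apply/subsetP => -[x|u] //= _; apply: codom_f).
rewrite (@adjunction_n_comp _ _ inr _ (frel (@edge_map _ e s)) symt syme _ (predC_closed cla)).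
  by apply: eq_n_comp_r.
apply: strict_adjunction => //; try exact: predC_closed; try (by move=> x y []);
    try (by apply/subsetP => -[x|u] //= _; apply: codom_f).
Qed.
End Proofs.

Lemma coarsen (X C : finType) (g : X -> C) k :
  0 < k -> k <= #|g @: setT| ->
  exists f : {ffun X -> 'I_k}, surj_col f && [forall x, forall y, (g x == g y) ==> (f x == f y)].
Proof.
case: k => // k _ hk.
pose s := enum (g @: setT).
exists [ffun x => inord (minn (index (g x) s) k) : 'I_k.+1].
apply/andP; split; last first.
  by apply/forallP => x; apply/forallP => y; apply/implyP => /eqP H; rewrite !ffunE H.
apply/forallP => c; apply/existsP.
have hs : size s = #|g @: setT| by rewrite /s cardE.
have [x0 _] : exists x0 : X, true.
  have : 0 < #|g @: setT| by lia.
  by case/card_gt0P => y /imsetP[x _ _]; exists x.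
have cs : c < size s by have := ltn_ord c; lia.
have : nth (g x0) s c \in g @: setT by rewrite -mem_enum mem_nth.
case/imsetP => x _ hx; exists x.
rewrite ffunE -hx index_uniq ?enum_uniq //.
have -> : minn c k = c by have := ltn_ord c; lia.
by rewrite inord_val.
Qed.

Section Theta.
Variables (T : finType) (e : rel T) (X : finType) (m : {perm T} -> X -> X).

Lemma theta_spec : 0 < theta_gen e m /\ theta_prop e m (theta_gen e m)
   /\ forall k, theta_prop e m k -> theta_gen e m <= k.
Proof.
rewrite /theta_gen; case: ex_minnP => n Pn Hmin; split; last by split.
by case/andP: Pn.
Qed.

Lemma prop_dist k (C : finType) (g : X -> C) s :
  theta_prop e m k -> k <= #|g @: setT| -> is_aut e s ->
  (forall a, g (m s a) = g a) -> s = 1%g.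
Proof.
case/andP=> k0 /forallP Hp hk As Hs.
have [f /andP[sf /forallP fg]] := coarsen k0 hk.
have := Hp f; rewrite sf /= => /forallP/(_ s); rewrite As /=.
suff -> : [forall a, f (m s a) == f a] by move=> /eqP.
apply/forallP => a; have /forallP := fg (m s a); move/(_ a)/implyP; apply.
by rewrite Hs.
Qed.

End Theta.

Lemma surj_card (X : finType) k (f : {ffun X -> 'I_k}) : surj_col f -> #|f @: setT| = k.
Proof.
move=> /forallP sf.
suff -> : f @: setT = setT by rewrite cardsT card_ord.
apply/setP => c; rewrite inE; have /existsP[x /eqP <-] := sf c.
by rewrite imset_f.
Qed.

Lemma partB (T : finType) (e : rel T) : theta_t e <= theta_v e + theta_e e - 1.
Proof.
rewrite /theta_t /theta_v /theta_e.
have [v0 [Pv _]] := theta_spec e (@vert_map T).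
have [e0 [Pe _]] := theta_spec e (@edge_map T e).
have [_ [_ Hmin]] := theta_spec e (@tot_map T e).
apply: Hmin; apply/andP; split; first lia.
apply/forallP => f; apply/implyP => sf.
apply/forallP => s; apply/implyP => /andP[As /forallP Hf].
apply/eqP.
have hk := surj_card sf.
pose gv := fun x : T => f (inl x).
pose ge := fun a : edge e => f (inr a).
have sub : f @: setT \subset gv @: setT :|: ge @: setT.
  by apply/subsetP => c /imsetP[[x|a] _ ->]; rewrite inE; apply/orP; [left|right]; exact: imset_f.
have := subset_leq_card sub; have := (leq_card_setU (gv @: setT) (ge @: setT)).1.
case: (leqP (theta_gen e (@vert_map T)) #|gv @: setT|) => hv H1 H2.
  by apply: (prop_dist Pv hv As) => x; have /eqP := Hf (inl x).
apply: (prop_dist (g := ge) Pe _ As).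
  clear -hk hv H1 H2 v0 e0; move: hk hv H1 H2; set A := #|_ :|: _|; set B := #|gv @: _|; set Cc := #|ge @: _|; set D := #|f @: _|; lia.
move=> a; by have /eqP := Hf (inr a).
Qed.

Lemma outside (T : finType) (A : {set T}) : #|A| < #|T| -> exists w, w \notin A.
Proof.
move=> h; case: (boolP [exists w, w \notin A]) => [/existsP//|/existsPn H].
suff : #|T| <= #|A| by lia.
by rewrite -cardsT subset_leq_card //; apply/subsetP => x _; have := H x; rewrite negbK.
Qed.

Lemma inlE (A B : eqType) (a b : A) : (inl a == inl b :> A + B) = (a == b).
Proof. by []. Qed.
Lemma inrE (A B : eqType) (a b : B) : (inr a == inr b :> A + B) = (a == b).
Proof. by []. Qed.

Section Conn.
Variables (T : finType) (e : rel T).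
Hypotheses (e_sym : symmetric e) (e_irr : irreflexive e)
  (e_conn : forall x y : T, connect e x y) (hT : 3 <= #|T|).

Lemma nbr (A : {set T}) x y : x \in A -> y \notin A ->
  exists u v, [/\ u \in A, v \notin A & e u v].
Proof.
move=> xA yA.
have [/existsP[u /existsP[v /and3P[uA vA euv]]]|H] :=
  boolP [exists u, exists v, [&& u \in A, v \notin A & e u v]].
  by exists u, v.
have cl : closed e A.
  apply: (intro_closed (sym_connect_sym e_sym)) => u v euv uA.
  apply/negPn/negP => vA; move/existsPn: H => /(_ u)/existsPn/(_ v).
  by rewrite uA vA euv.
have := closed_connect cl (e_conn x y); rewrite xA.
by move=> hh; move: yA; rewrite -hh.
Qed.

Lemma fixE_mem s (a : edge e) u : is_aut e s -> edge_map s a = a ->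
  u \in val a -> s u \in val a.
Proof.
move=> As H ua; have := edge_val a As; rewrite H => ->; exact: imset_f.
Qed.

Definition mkedge x y (h : e x y) : edge e.
exists [set x; y]; apply/existsP; exists x; apply/existsP; exists y; by rewrite h eqxx.
Defined.

Lemma fixE s : is_aut e s -> (forall a : edge e, edge_map s a = a) -> s = 1%g.
Proof.
move=> As H; apply/permP => x; rewrite perm1; apply/eqP; apply/negPn/negP => hx.
have [y hy] : exists y, y \notin [set x] by apply: outside; rewrite cards1; lia.
have [u [z [ux zx exz]]] := nbr (set11 x) hy.
move: ux; rewrite inE => /eqP ?; subst u; move: zx; rewrite inE => zx.
have m1 := fixE_mem (u := x) As (H (mkedge exz)).
have m2 := fixE_mem (u := z) As (H (mkedge exz)).
rewrite /= !in_set2 !eqxx ?orbT /= in m1 m2.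
have sxz : s x = z by case/orP: (m1 isT) => /eqP // hh; rewrite hh eqxx in hx.
have szx : s z = x.
  case/orP: (m2 isT) => /eqP // hh.
  by have /perm_inj hzx := etrans hh (esym sxz); rewrite hzx eqxx in zx.
have [w hw] : exists w, w \notin [set x; z] by apply: outside; rewrite cards2; apply: (leq_ltn_trans _ hT); by case: (x != z).
have xin : x \in [set x; z] by rewrite !inE eqxx.
have [u [v [uA vA euv]]] := nbr xin hw.
have := fixE_mem (u := u) As (H (mkedge euv)); rewrite /= !in_set2 eqxx /= => /(_ isT).
move: uA; rewrite !in_set2 => /orP[]/eqP ?; subst u.
  rewrite sxz => /orP[]/eqP hh; first by rewrite hh eqxx in zx.
  by move: vA; rewrite -hh !inE eqxx orbT.
rewrite szx => /orP[]/eqP hh; first by rewrite hh eqxx in zx.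
by move: vA; rewrite -hh !inE eqxx.
Qed.

Lemma partC : theta_t e <= #|T| + #|{: edge e}| - 1.
Proof.
rewrite /theta_t.
have [_ [_ Hmin]] := theta_spec e (@tot_map T e).
apply: Hmin; apply/andP; split; first lia.
apply/forallP => f; apply/implyP => sf.
apply/forallP => s; apply/implyP => /andP[As /forallP Hf].
have hk := surj_card sf.
case: (boolP (s == 1%g)) => // hs; exfalso.
have [x hx] : exists x, s x != x.
  case: (boolP [exists x, s x != x]) => [/existsP//|/existsPn H].
  have hs1 : s = 1%g by apply/permP => y; rewrite perm1; apply/eqP; have := H y; rewrite negbK.
  by rewrite hs1 eqxx in hs.
have [a ha] : exists a : edge e, edge_map s a != a.
  case: (boolP [exists a : edge e, edge_map s a != a]) => [/existsP//|/existsPn H].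
  have hs1 : s = 1%g by apply: (fixE As) => b; apply/eqP; have := H b; rewrite negbK.
  by rewrite hs1 eqxx in hs.
pose p : T + edge e := inl (s x).
pose q : T + edge e := inr (edge_map s a).
pose D := [set: T + edge e] :\ p :\ q.
have xD : inl x \in D.
  rewrite /D !inE andbT /p /q; apply/andP; split; apply/eqP => // -[] h; by rewrite -h eqxx in hx.
have aD : inr a \in D.
  rewrite /D !inE andbT /p /q; apply/andP; split; apply/eqP => // -[] h; by rewrite -h eqxx in ha.
have sub : f @: setT \subset f @: D.
  apply/subsetP => c /imsetP[z _ ->].
  case: (eqVneq z p) => [->|zp].
    by have /eqP -> := Hf (inl x); exact: imset_f.
  case: (eqVneq z q) => [->|zq].
    by have /eqP -> := Hf (inr a); exact: imset_f.
  by apply: imset_f; rewrite !inE zp zq.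
have cD : #|D| + 2 = #|[set: T + edge e]|.
  have := cardsD1 p [set: T + edge e]; have := cardsD1 q ([set: T + edge e] :\ p).
  rewrite !inE.
  move=> h1 h2; rewrite /D; move: h1 h2; set n1 := #|_ :\ q|; set n2 := #|_ :\ p|.
  set N := #|[set: _]|; have -> : (q != p) = true by []; lia.
have h1 := subset_leq_card sub.
have h2 := leq_imset_card f D.
move: h1 h2 hk cD; have cE : #|[set: T + edge e]| = #|T| + #|{: edge e}| := etrans (cardsT _) (card_sum _ _); rewrite cE.
set A1 := #|f @: setT|; set A2 := #|f @: D|; set A3 := #|D|; lia.
Qed.

Lemma partStar : is_star e -> theta_t e = #|T| + #|{: edge e}| - 1.
Proof.
case=> c hc.
apply/eqP; rewrite eqn_leq partC /=.
have [l1 hl1] : exists l1, l1 \notin [set c] by apply: outside; rewrite cards1; lia.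
have [l2 hl2] : exists l2, l2 \notin [set c; l1].
  by apply: outside; rewrite cards2; apply: (leq_ltn_trans _ hT); case: (c != l1).
move: hl1 hl2; rewrite !inE negb_or => l1c /andP[l2c l2l1].
pose sg := tperm l1 l2.
have sc : sg c = c by rewrite tpermD // eq_sym.
have As : is_aut e sg.
  apply/forallP => x; apply/forallP => y; rewrite !hc (inj_eq (@perm_inj _ sg)).
  by rewrite -{1}sc -{2}sc !(inj_eq (@perm_inj _ sg)).
have ec1 : e c l1 by rewrite hc eqxx /= eq_sym l1c.
pose a1 := mkedge ec1.
pose a2 := edge_map sg a1.
have va1 : val a1 = [set c; l1] by [].
have va2 : val a2 = [set c; l2] by rewrite edge_val // va1 imset2E sc tpermL.
have a12 : (a1 == a2) = false.
  apply/negP => /eqP h; have : l1 \in val a2 by rewrite -h va1 !inE eqxx orbT.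
  by rewrite va2 !inE (negbTE l1c) eq_sym (negbTE l2l1).
have ecl : forall b : edge e, exists w, w != c /\ val b = [set c; w].
  move=> b; have [u [v [euv ->]]] := edgeP b; move: euv; rewrite hc.
  case: (eqVneq u c) => [->|uc] /=.
    by rewrite andbT => cv; exists v; rewrite eq_sym cv.
  move=> /andP[uv /eqP vc]; subst v; exists u; split=> //; exact: setUC.
pose g (z : T + edge e) : T + edge e :=
  if z == inl l2 then inl l1 else if z == inr a2 then inr a1 else z.
have pres : forall z, g (tot_map sg z) = g z.
  case=> [x|b] /=; rewrite /g /= ?inlE ?inrE.
    case: (eqVneq x l1) => [->|x1].
      by rewrite /sg tpermL eqxx eq_sym (negbTE l2l1).
    case: (eqVneq x l2) => [->|x2].
      by rewrite /sg tpermR; case: (l1 == l2).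
    by rewrite /sg tpermD; [rewrite (negbTE x2) | rewrite eq_sym | rewrite eq_sym].
  have [w [wc vb]] := ecl b.
  case: (eqVneq w l1) => [wl1|w1].
    have -> : b = a1 by apply: val_inj; rewrite vb va1 wl1.
    by rewrite eqxx a12.
  case: (eqVneq w l2) => [wl2|w2].
    have -> : b = a2 by apply: val_inj; rewrite vb va2 wl2.
    have -> : edge_map sg a2 = a1.
      by apply: val_inj; rewrite edge_val // va2 va1 imset2E sc /sg tpermR.
    by rewrite eqxx a12.
  have -> // : edge_map sg b = b.
  by apply: val_inj; rewrite edge_val // vb imset2E sc /sg tpermD // eq_sym.
have cS : #|[set: T + edge e] :\ inl l2 :\ inr a2| + 2 = #|[set: T + edge e]|.
  have := cardsD1 (inl l2) [set: T + edge e].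
  have := cardsD1 (inr a2) ([set: T + edge e] :\ inl l2).
  rewrite !inE; set n1 := #|_ :\ inr a2|; set n2 := #|_ :\ inl l2|.
  set N := #|[set: _]|; have -> : (inr a2 != inl l2 :> T + edge e) = true by []; move=> h1 h2; lia.
have sub : [set: T + edge e] :\ inl l2 :\ inr a2 \subset g @: setT.
  apply/subsetP => z; rewrite !inE andbT => /andP[z2 z1].
  have -> : z = g z by rewrite /g (negbTE z1) (negbTE z2).
  exact: imset_f.
have hcard := subset_leq_card sub.
have cE : #|[set: T + edge e]| = #|T| + #|{: edge e}| := etrans (cardsT _) (card_sum _ _).
rewrite leqNgt; apply/negP => H.
have [t0 [Pt _]] := theta_spec e (@tot_map T e).
suff : sg = 1%g.
  by move/permP/(_ l1); rewrite perm1 /sg tpermL => h; rewrite h eqxx in l2l1.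
apply: (prop_dist Pt _ As pres).
rewrite /theta_t in H.
move: H hcard cS cE; set t := theta_gen _ _; set A := #|g @: _|; set B := #|_ :\ inr a2|.
set N := #|[set: _]|; set M := #|{: edge e}|; move: t A B N M (#|T|) => t A B N M K; lia.
Qed.

End Conn.

Theorem mainTheorem8 (T : finType) (e : rel T)
  (e_sym : symmetric e) (e_irr : irreflexive e)
  (e_conn : forall x y : T, connect e x y)
  (hT : 3 <= #|T|) :
  (forall s : {perm T}, is_aut e s -> cyc_t e s = cyc_v s + cyc_e e s)
  /\ theta_t e <= theta_v e + theta_e e - 1
  /\ theta_t e <= #|T| + #|{: edge e}| - 1
  /\ (is_star e -> theta_t e = #|T| + #|{: edge e}| - 1).
Proof.
split; first by move=> s As; exact: partA.
split; first exact: partB.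
split; first exact: partC.
exact: partStar.
Qed.
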